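(* For every finite multiset $\Gamma$ of formulas and every formula $\varphi$: if the sequent $\Gamma\Rightarrow\varphi$ is provable in $\mathsf{G4iSLt}$, then $\Gamma\models\varphi$, i.e. for every Kripke model $\mathcal M$ for $\mathsf{iSL}$ and every world $w$ of $\mathcal M$, if $\mathcal M,w\Vdash\psi$ for all $\psi\in\Gamma$ then $\mathcal M,w\Vdash\varphi$.
   Context: Formulas are built by the grammar $\varphi ::= p \mid \bot \mid \varphi\land\varphi \mid \varphi\lor\varphi \mid \varphi\to\varphi \mid \Box\varphi$, with $p$ ranging over a countably infinite set $\mathbb V$ of propositional variables. For a multiset $\Gamma$, $\Box\Gamma=\{\Box\psi:\psi\in\Gamma\}$; a boxed formula is one of the form $\Box\psi$. A Kripke model for $\mathsf{iSL}$ is a tuple $(W,\leq,R,I)$ with $W$ a non-empty set, $\leq,R\subseteq W\times W$, and $I:\mathbb V\to\mathcal P(W)$, such that: $\leq$ is reflexive and transitive; $R$ is transitive and converse well-founded (no infinite chain $w_0Rw_1Rw_2R\cdots$); $(\leq\circ R)\subseteq R$ (i.e. $w\leq u$ and $uRv$ imply $wRv$); $R\subseteq\ \leq$; and for all $p$, if $w\leq v$ and $w\in I(p)$ then $v\in I(p)$. Forcing: $w\Vdash p$ iff $w\in I(p)$; $w\Vdash\bot$ never; $w\Vdash\varphi\land\psi$ iff both; $w\Vdash\varphi\lor\psi$ iff at least one; $w\Vdash\varphi\to\psi$ iff for all $v\geq w$, $v\Vdash\varphi$ implies $v\Vdash\psi$; $w\Vdash\Box\varphi$ iff for all $v$ with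 $wRv$, $v\Vdash\varphi$. A sequent is $\Gamma\Rightarrow\chi$ with $\Gamma$ a finite multiset of formulas and $\chi$ a formula. The sequent calculus $\mathsf{G4iSLt}$ has the following rules, where $p$ is a propositional variable and $\Phi$ always denotes a multiset containing no boxed formula: (⊥L) $\bot,\Gamma\Rightarrow\chi$ (no premise); (IdP) $\Gamma,p\Rightarrow p$ (no premise); (∧L) from $\Gamma,\varphi,\psi\Rightarrow\chi$ infer $\Gamma,\varphi\land\psi\Rightarrow\chi$; (∧R) from $\Gamma\Rightarrow\varphi$ and $\Gamma\Rightarrow\psi$ infer $\Gamma\Rightarrow\varphi\land\psi$; (∨L) from $\Gamma,\varphi\Rightarrow\chi$ and $\Gamma,\psi\Rightarrow\chi$ infer $\Gamma,\varphi\lor\psi\Rightarrow\chi$; (∨R$_i$), $i\in\{1,2\}$: from $\Gamma\Rightarrow\varphi_i$ infer $\Gamma\Rightarrow\varphi_1\lor\varphi_2$; (p→L) from $\Gamma,p,\varphi\Rightarrow\chi$ infer $\Gamma,p,p\to\varphi\Rightarrow\chi$; (→R) from $\Gamma,\varphi\Rightarrow\psi$ infer $\Gamma\Rightarrow\varphi\to\psi$; (□→L) from $\Phi,\Gamma,\psi,\Box\varphi\Rightarrow\varphi$ and $\Phi,\Box\Gamma,\psi\Rightarrow\chi$ infer $\Phi,\Box\Gamma,\Box\varphi\to\psi\Rightarrow\chi$; (SLtR) from $\Phi,\Gamma,\Box\varphi\Rightarrow\varphi$ infer $\Phi,\Box\Gamma\Rightarrow\Box\varphi$; (∧→L) from $\Gamma,\varphi\to(\psi\to\chi)\Rightarrow\delta$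 infer $\Gamma,(\varphi\land\psi)\to\chi\Rightarrow\delta$; (∨→L) from $\Gamma,\varphi\to\chi,\psi\to\chi\Rightarrow\delta$ infer $\Gamma,(\varphi\lor\psi)\to\chi\Rightarrow\delta$; (→→L) from $\Gamma,\psi\to\chi\Rightarrow\varphi\to\psi$ and $\Gamma,\chi\Rightarrow\delta$ infer $\Gamma,(\varphi\to\psi)\to\chi\Rightarrow\delta$. A proof of a sequent $S$ is a finite tree of sequents with root $S$ in which each interior node together with its children forms an instance of a rule (conclusion, premises) and each leaf is the conclusion of a premise-free rule; $S$ is provable if it has a proof. *)

(* Defs.v *)
From Stdlib Require Import List Permutation.
Import ListNotations.

Inductive form : Type :=
| Var : nat -> form
| Bot : form
| And : form -> form -> form
| Or  : form -> form -> form
| Imp : form -> form -> form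
| Box : form -> form.

Definition is_boxed (A : form) : Prop :=
  match A with Box _ => True | _ => False end.

Definition no_boxed (Phi : list form) : Prop := forall A, In A Phi -> ~ is_boxed A.

Definition boxes (G : list form) : list form := map Box G.

(* A sequent Γ ⇒ χ has Γ a finite multiset, represented by a list;
   every rule may be applied to any list that is a permutation of the displayed
   context, so derivability only depends on the multiset. *)
Inductive G4iSLt : list form -> form -> Prop :=
| BotL : forall D G chi, Permutation D (Bot :: G) -> G4iSLt D chi
| IdP : forall D G p, Permutation D (Var p :: G) -> G4iSLt D (Var p)
| AndL : forall D G a b chi, Permutation D (And a b :: G) ->
    G4iSLt (a :: b :: G) chi -> G4iSLt D chi
| AndR : forall G a b, G4iSLt G a -> G4iSLt G b -> G4iSLt G (And a b)
| OrL : forall D G a b chi, Permutation D (Or a b :: G) ->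
    G4iSLt (a :: G) chi -> G4iSLt (b :: G) chi -> G4iSLt D chi
| OrR1 : forall G a b, G4iSLt G a -> G4iSLt G (Or a b)
| OrR2 : forall G a b, G4iSLt G b -> G4iSLt G (Or a b)
| PImpL : forall D G p a chi, Permutation D (Var p :: Imp (Var p) a :: G) ->
    G4iSLt (Var p :: a :: G) chi -> G4iSLt D chi
| ImpR : forall G a b, G4iSLt (a :: G) b -> G4iSLt G (Imp a b)
| BoxImpL : forall D Phi G a b chi, no_boxed Phi ->
    Permutation D (Phi ++ boxes G ++ [Imp (Box a) b]) ->
    G4iSLt (Phi ++ G ++ [b; Box a]) a ->
    G4iSLt (Phi ++ boxes G ++ [b]) chi ->
    G4iSLt D chi
| SLtR : forall D Phi G a, no_boxed Phi ->
    Permutation D (Phi ++ boxes G) ->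
    G4iSLt (Phi ++ G ++ [Box a]) a ->
    G4iSLt D (Box a)
| AndImpL : forall D G a b c d, Permutation D (Imp (And a b) c :: G) ->
    G4iSLt (Imp a (Imp b c) :: G) d -> G4iSLt D d
| OrImpL : forall D G a b c d, Permutation D (Imp (Or a b) c :: G) ->
    G4iSLt (Imp a c :: Imp b c :: G) d -> G4iSLt D d
| ImpImpL : forall D G a b c d, Permutation D (Imp (Imp a b) c :: G) ->
    G4iSLt (Imp b c :: G) (Imp a b) -> G4iSLt (c :: G) d -> G4iSLt D d.

Record kmodel : Type := {
  W : Type;
  W_inh : inhabited W;
  le : W -> W -> Prop;
  R : W -> W -> Prop;
  I : nat -> W -> Prop;
  le_refl : forall w, le w w;
  le_trans : forall u v w, le u v -> le v w -> le u w;
  R_trans : forall u v w, R u v -> R v w -> R u w;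
  R_cwf : ~ exists f : nat -> W, forall n, R (f n) (f (S n));
  le_R : forall w u v, le w u -> R u v -> R w v;
  R_le : forall w v, R w v -> le w v;
  I_mono : forall p w v, le w v -> I p w -> I p v
}.

Fixpoint forces (M : kmodel) (w : W M) (A : form) : Prop :=
  match A with
  | Var p => I M p w
  | Bot => False
  | And a b => forces M w a /\ forces M w b
  | Or a b => forces M w a \/ forces M w b
  | Imp a b => forall v, le M w v -> forces M v a -> forces M v b
  | Box a => forall v, R M w v -> forces M v a
  end.

Definition entails (G : list form) (A : form) : Prop :=
  forall (M : kmodel) (w : W M), (forall B, In B G -> forces M w B) -> forces M w A.

(* Main.v *)
Require Import Defs.
From Stdlib Require Import List Permutation.
From Stdlib Require Import Classical ClassicalEpsilon.
Import ListNotations.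

Lemma persist (M : kmodel) (A : form) : forall (w v : W M), le M w v -> forces M w A -> forces M v A.
Proof.
  induction A; simpl; intros w v Hle H.
  - eapply I_mono; eauto.
  - exact H.
  - destruct H; split; eauto.
  - destruct H; [left|right]; eauto.
  - intros u Hu. apply H. eapply le_trans; eauto.
  - intros u Hu. apply H. eapply le_R; eauto.
Qed.

Lemma R_ind (M : kmodel) (P : W M -> Prop) :
  (forall v, (forall u, R M v u -> P u) -> P v) -> forall v, P v.
Proof.
  intros H v0. apply NNPP. intro Hn.
  assert (step : forall x : {v | ~ P v}, {u : {v | ~ P v} | R M (proj1_sig x) (proj1_sig u)}).
  { intros [x Hx]. apply constructive_indefinite_description.
    apply NNPP. intro Hc. apply Hx. apply H. intros u Hu. apply NNPP. intro Hu'.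
    apply Hc. exists (exist _ u Hu'). exact Hu. }
  pose (g := fix g (n : nat) : {v | ~ P v} :=
    match n with O => exist _ v0 Hn | S n => proj1_sig (step (g n)) end).
  apply (R_cwf M). exists (fun n => proj1_sig (g n)). intro n.
  simpl. exact (proj2_sig (step (g n))).
Qed.

Lemma ent_perm (G D : list form) (A : form -> Prop) : Permutation D G -> (forall B, In B D -> A B) -> forall B, In B G -> A B.
Proof. intros P H B HB. apply H. eapply Permutation_in; [symmetry; exact P| exact HB]. Qed.

Theorem mainTheorem4 : forall (G : list form) (phi : form),
  G4iSLt G phi -> entails G phi.
Proof.
  unfold entails.
  induction 1; intros M w Hw.
  - pose proof (ent_perm _ _ _ H Hw) as H'. destruct (H' Bot (or_introl eq_refl)).
  - pose proof (ent_perm _ _ _ H Hw) as H'. exact (H' _ (or_introl eq_refl)).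
  - pose proof (ent_perm _ _ _ H Hw) as H'. apply IHG4iSLt.
    destruct (H' _ (or_introl eq_refl)) as [Ha Hb].
    intros B [<-|[<-|HB]]; auto. apply H'; right; auto.
  - simpl; split; eauto.
  - pose proof (ent_perm _ _ _ H Hw) as H'.
    destruct (H' _ (or_introl eq_refl)) as [Ha|Hb].
    + apply IHG4iSLt1. intros B [<-|HB]; auto. apply H'; right; auto.
    + apply IHG4iSLt2. intros B [<-|HB]; auto. apply H'; right; auto.
  - simpl; left; eauto.
  - simpl; right; eauto.
  - pose proof (ent_perm _ _ _ H Hw) as H'. apply IHG4iSLt.
    pose proof (H' _ (or_introl eq_refl)) as Hp.
    pose proof (H' _ (or_intror (or_introl eq_refl))) as Hi.
    simpl in Hi. specialize (Hi w (le_refl M w) Hp).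
    intros B [<-|[<-|HB]]; auto. apply H'; right; right; auto.
  - simpl. intros v Hv Ha. apply IHG4iSLt. intros B [<-|HB]; auto.
    eapply persist; eauto.
  -
    pose proof (ent_perm _ _ _ H0 Hw) as H'.
    assert (HPhi : forall B, In B Phi -> forces M w B).
    { intros B HB; apply H'; apply in_app_iff; auto. }
    assert (HG : forall B, In B G -> forces M w (Box B)).
    { intros B HB; apply H'; apply in_app_iff; right; apply in_app_iff; left.
      unfold boxes; apply in_map; auto. }
    assert (Himp : forces M w (Imp (Box a) b)).
    { apply H'; apply in_app_iff; right; apply in_app_iff; right; left; auto. }
    assert (HBa : forces M w (Box a)).
    { simpl. intro v. pattern v. apply R_ind. clear v. intros v IH Hwv.
      assert (HBv : forces M v (Box a)) by (simpl; intros u Hu; apply IH; auto; eapply R_trans; eauto).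
      apply IHG4iSLt1. intros B HB. apply in_app_iff in HB as [HB|HB].
      - eapply persist; [apply R_le; eauto| auto].
      - apply in_app_iff in HB as [HB|[<-|[<-|[]]]].
        + apply (HG B HB); auto.
        + apply (Himp v (R_le _ _ _ Hwv) HBv).
        + auto. }
    apply IHG4iSLt2. intros B HB. apply in_app_iff in HB as [HB|HB]; auto.
    apply in_app_iff in HB as [HB|[<-|[]]].
    + apply H'; apply in_app_iff; right; apply in_app_iff; auto.
    + apply (Himp w (le_refl M w) HBa).
  -
    pose proof (ent_perm _ _ _ H0 Hw) as H'.
    assert (HPhi : forall B, In B Phi -> forces M w B).
    { intros B HB; apply H'; apply in_app_iff; auto. }
    assert (HG : forall B, In B G -> forces M w (Box B)).
    { intros B HB; apply H'; apply in_app_iff; right.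
      unfold boxes; apply in_map; auto. }
    simpl. intro v. pattern v. apply R_ind. clear v. intros v IH Hwv.
    assert (HBv : forces M v (Box a)) by (simpl; intros u Hu; apply IH; auto; eapply R_trans; eauto).
    apply IHG4iSLt. intros B HB. apply in_app_iff in HB as [HB|HB].
    + eapply persist; [apply R_le; eauto| auto].
    + apply in_app_iff in HB as [HB|[<-|[]]].
      * apply (HG B HB); auto.
      * auto.
  - pose proof (ent_perm _ _ _ H Hw) as H'. apply IHG4iSLt.
    pose proof (H' _ (or_introl eq_refl)) as Hi. simpl in Hi.
    intros B [<-|HB]; [|apply H'; right; auto].
    simpl. intros v Hv Ha u Hu Hb. apply (Hi u).
    + eapply le_trans; eauto.
    + split; auto. eapply persist; eauto.
  - pose proof (ent_perm _ _ _ H Hw) as H'. apply IHG4iSLt.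
    pose proof (H' _ (or_introl eq_refl)) as Hi. simpl in Hi.
    intros B [<-|[<-|HB]]; [| |apply H'; right; auto]; simpl; intros v Hv Ha; apply Hi; auto.
  - pose proof (ent_perm _ _ _ H Hw) as H'.
    pose proof (H' _ (or_introl eq_refl)) as Hi. simpl in Hi.
    assert (Hab : forces M w (Imp a b)).
    { apply IHG4iSLt1. intros B [<-|HB]; [|apply H'; right; auto].
      simpl. intros v Hv Hb. apply Hi; auto. intros u Hu _. eapply persist; eauto. }
    apply IHG4iSLt2. intros B [<-|HB]; [|apply H'; right; auto].
    apply Hi; [apply le_refl|]. exact Hab.
Qed.
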